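(* If $\Gamma\vdash^k t:\sigma$ is derivable in $\cap J$, then $t\in SN_{d\beta}$ and $\|t\|_{d\beta}\le k$, where $\|t\|_{d\beta}$ is the maximal length of a $\to_{d\beta}$-reduction sequence starting at $t$.
   Context: Terms $\mathtt T_J$: $t,u,r ::= x \mid \lambda x.t \mid t(u,y.r)$ ($y$ bound in $r$), up to $\alpha$-equivalence; $\{u/x\}t$ capture-avoiding substitution. List contexts $\mathtt D ::= \Diamond \mid t(u,y.\mathtt D)$. Distant beta: $\mathtt D\langle\lambda x.t\rangle(u,y.r) \mapsto_{d\beta} \{\{u/x\}\mathtt D\langle t\rangle/y\}r$ (variables bound by $\mathtt D$ not free in $u$, $x$ not in $\mathtt D$), $\to_{d\beta}$ its closure under all contexts; $SN_{d\beta}$ the set of terms with no infinite $\to_{d\beta}$-sequence. System $\cap J$: types $\sigma,\tau ::= \alpha \mid \mathcal M\to\sigma$, $\mathcal M=[\sigma_i]_{i\in I}$ a finite possibly empty multiset; $\sqcup$ multiset union; environments map variables to multisets, $\wedge$ pointwise union, $\Gamma;x:\mathcal M$ extension with $x\notin\mathrm{dom}\,\Gamma$. $\mathrm{ch}(\mathcal M)=\mathcal M$ if $\mathcal M\ne[\,]$, $\mathrm{ch}([\,])=[\tau]$ for an arbitrary $\tau$. Rules: (var) $x:[\sigma]\vdash x:\sigma$; (abs) from $\Gamma;x:\mathcal M\vdash t:\sigma$ infer $\Gamma\vdash\lambda x.t:\mathcal M\to\sigma$; (many) from $(\Gamma_i\vdash t:\sigma_i)_{i\in I}$, $I\ne\emptyset$,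 infer $\wedge_i\Gamma_i\vdash t:[\sigma_i]_{i\in I}$; (app) from $\Gamma\vdash t:\mathrm{ch}([\mathcal M_i\to\tau_i]_{i\in I})$, $\Delta\vdash u:\mathrm{ch}(\sqcup_i\mathcal M_i)$, $\Lambda;y:[\tau_i]_{i\in I}\vdash r:\sigma$ infer $\Gamma\wedge\Delta\wedge\Lambda\vdash t(u,y.r):\sigma$. $\vdash^k$ indicates a derivation of size $k$ = number of rule instances other than (many). *)

(* Defs.v *)
(* Terms of T_J in de Bruijn representation (terms up to alpha). *)
From Stdlib Require Import List Arith Permutation.
Import ListNotations.

(** Terms: x | \x.t | t(u, y.r)  -- in App t u r, r is under one binder (y). *)
Inductive term : Type :=
| Var : nat -> term
| Lam : term -> term
| App : term -> term -> term -> term.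

Fixpoint lift (k c : nat) (t : term) : term :=
  match t with
  | Var n => Var (if n <? c then n else n + k)
  | Lam t' => Lam (lift k (S c) t')
  | App t1 t2 r => App (lift k c t1) (lift k c t2) (lift k (S c) r)
  end.

Fixpoint subst (s : term) (j : nat) (t : term) : term :=
  match t with
  | Var n => if n <? j then Var n
             else if n =? j then lift j 0 s else Var (n - 1)
  | Lam t' => Lam (subst s (S j) t')
  | App t1 t2 r => App (subst s j t1) (subst s j t2) (subst s (S j) r)
  end.

(** List contexts D ::= <> | t(u, y.D) *)
Inductive lctx : Type :=
| Hole : lctx
| LApp : term -> term -> lctx -> lctx.

Fixpoint plug (D : lctx) (t : term) : term :=
  match D with
  | Hole => t
  | LApp a b D' => App a b (plug D' t)
  end.

Fixpoint depth (D : lctx) : nat :=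
  match D with
  | Hole => 0
  | LApp _ _ D' => S (depth D')
  end.

(** Distant beta at the root:
    D<\x.t>(u, y.r) |-> {{u/x}D<t>/y} r.
    The side conditions (variables bound by D not free in u, x not in D)
    are realised by lifting u past the depth(D) binders of D. *)
Inductive dbeta_root : term -> term -> Prop :=
| DBeta : forall D t u r,
    dbeta_root (App (plug D (Lam t)) u r)
               (subst (plug D (subst (lift (depth D) 0 u) 0 t)) 0 r).

Inductive dbeta : term -> term -> Prop :=
| st_root : forall t t', dbeta_root t t' -> dbeta t t'
| st_lam : forall t t', dbeta t t' -> dbeta (Lam t) (Lam t')
| st_app1 : forall t t' u r, dbeta t t' -> dbeta (App t u r) (App t' u r)
| st_app2 : forall t u u' r, dbeta u u' -> dbeta (App t u r) (App t u' r)
| st_app3 : forall t u r r', dbeta r r' -> dbeta (App t u r) (App t u r').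

Definition SN (t : term) : Prop := Acc (fun t' t => dbeta t t') t.

Inductive dbeta_n : nat -> term -> term -> Prop :=
| dn_refl : forall t, dbeta_n 0 t t
| dn_step : forall n t t' t'', dbeta t t' -> dbeta_n n t' t'' -> dbeta_n (S n) t t''.

Definition maxred_le (t : term) (k : nat) : Prop :=
  forall n t', dbeta_n n t t' -> n <= k.

(** Types: sigma ::= alpha | M -> sigma, with multisets represented as lists
    considered up to permutation (and, recursively, up to type equivalence). *)
Inductive ty : Type :=
| TVar : nat -> ty
| Arr : list ty -> ty -> ty.

Inductive tyeq : ty -> ty -> Prop :=
| tyeq_var : forall a, tyeq (TVar a) (TVar a)
| tyeq_arr : forall M N N' s s',
    Permutation N' N -> Forall2 tyeq M N' -> tyeq s s' -> tyeq (Arr M s) (Arr N s').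

Definition meq (M N : list ty) : Prop :=
  exists N', Permutation N' N /\ Forall2 tyeq M N'.

(** ch(M) = M if M <> [], ch([]) = [tau] (tau supplied explicitly) *)
Definition ch (tau : ty) (M : list ty) : list ty :=
  match M with [] => [tau] | _ => M end.

Definition env := nat -> list ty.

Definition env_union (G D : env) : env := fun n => G n ++ D n.

Definition scons (M : list ty) (G : env) : env :=
  fun n => match n with 0 => M | S n' => G n' end.

Definition env_single (x : nat) (s : ty) : env :=
  fun n => if n =? x then [s] else [].

(** System cap-J with derivation sizes (the (many) rule is not counted). *)
Inductive typ : env -> term -> ty -> nat -> Prop :=
| T_var : forall x s, typ (env_single x s) (Var x) s 1
| T_abs : forall G M t s k,
    typ (scons M G) t s k -> typ G (Lam t) (Arr M s) (S k)
| T_app : forall (L : list (list ty * ty)) tau0 tau1 G D Lr N t u r s kt ku kr,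
    mtyp G t (ch tau0 (map (fun p => Arr (fst p) (snd p)) L)) kt ->
    mtyp D u N ku ->
    meq N (ch tau1 (concat (map fst L))) ->
    meq (Lr 0) (map snd L) ->
    typ Lr r s kr ->
    typ (env_union G (env_union D (fun n => Lr (S n)))) (App t u r) s (S (kt + ku + kr))
with mtyp : env -> term -> list ty -> nat -> Prop :=
| M_one : forall G t s k, typ G t s k -> mtyp G t [s] k
| M_cons : forall G G' t s M k k',
    typ G t s k -> mtyp G' t M k' -> mtyp (env_union G G') t (s :: M) (k + k').

(* Main.v *)
Require Import Defs.
From Stdlib Require Import List Arith Permutation Lia FunctionalExtensionality.
Import ListNotations.

Fixpoint ty_ind' (P : ty -> Prop) (Hv : forall n, P (TVar n))
  (Ha : forall M s, Forall P M -> P s -> P (Arr M s)) (t : ty) : P t :=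
  match t with
  | TVar n => Hv n
  | Arr M s => Ha M s
      ((fix go (l : list ty) : Forall P l :=
          match l with [] => Forall_nil _ | x :: l' => Forall_cons _ (ty_ind' P Hv Ha x) (go l') end) M)
      (ty_ind' P Hv Ha s)
  end.

Lemma tyeq_refl : forall a, tyeq a a.
Proof.
  apply ty_ind'.
  - constructor.
  - intros M s HM Hs. apply tyeq_arr with (N' := M); auto.
    induction HM; constructor; auto.
Qed.

Lemma tyeq_sym : forall a b, tyeq a b -> tyeq b a.
Proof.
  induction a as [n|M s HM Hs] using ty_ind'; intros b H;
    inversion H as [|M0 N N' s0 s' HP HF Hss]; subst.
  - constructor.
  - assert (F : Forall2 tyeq N' M).
    { clear H HP. revert N' HF. induction HM; intros N' HF; inversion HF; subst; constructor; auto. }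
    destruct (Permutation_Forall2 HP F) as [M' [HP' HF']].
    apply tyeq_arr with (N' := M'); auto. apply Permutation_sym; auto.
Qed.

Lemma Forall2_tyeq_trans : forall M, Forall (fun a => forall b c, tyeq a b -> tyeq b c -> tyeq a c) M ->
  forall N P, Forall2 tyeq M N -> Forall2 tyeq N P -> Forall2 tyeq M P.
Proof.
  induction 1; intros N P H1 H2; inversion H1; subst; inversion H2; subst; constructor; eauto.
Qed.

Lemma tyeq_trans : forall a b c, tyeq a b -> tyeq b c -> tyeq a c.
Proof.
  induction a as [n|M s HM Hs] using ty_ind'; intros b c H1 H2;
    inversion H1 as [|M0 N N1 s0 s' HP1 HF1 Hs1]; subst;
    inversion H2 as [|M1 P P1 s1 s'' HP2 HF2 Hs2]; subst.
  - constructor.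
  - destruct (Permutation_Forall2 (Permutation_sym HP1) HF2) as [P2 [HP HF]].
    apply tyeq_arr with (N' := P2).
    + eapply Permutation_trans; [apply Permutation_sym; eauto| auto].
    + eapply Forall2_tyeq_trans; eauto.
    + eauto.
Qed.

Lemma Forall2_tyeq_refl : forall M, Forall2 tyeq M M.
Proof. induction M; constructor; auto using tyeq_refl. Qed.

Lemma Forall2_tyeq_sym : forall M N, Forall2 tyeq M N -> Forall2 tyeq N M.
Proof. induction 1; constructor; auto using tyeq_sym. Qed.

Lemma Forall2_tyeq_trans' : forall M N P, Forall2 tyeq M N -> Forall2 tyeq N P -> Forall2 tyeq M P.
Proof.
  intros M N P H1. revert P. induction H1; intros P H2; inversion H2; subst; constructor; eauto using tyeq_trans.
Qed.

Lemma meq_refl : forall M, meq M M.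
Proof. intros M. exists M. split; auto using Forall2_tyeq_refl. Qed.

Lemma meq_sym : forall M N, meq M N -> meq N M.
Proof.
  intros M N [N' [HP HF]].
  destruct (Permutation_Forall2 HP (Forall2_tyeq_sym _ _ HF)) as [M' [HP' HF']].
  exists M'. split; auto. apply Permutation_sym; auto.
Qed.

Lemma meq_trans : forall M N P, meq M N -> meq N P -> meq M P.
Proof.
  intros M N P [N1 [HP1 HF1]] [P1 [HP2 HF2]].
  destruct (Permutation_Forall2 (Permutation_sym HP1) HF2) as [P2 [HP HF]].
  exists P2. split.
  - eapply Permutation_trans; [apply Permutation_sym; eauto| auto].
  - eapply Forall2_tyeq_trans'; eauto.
Qed.

Lemma meq_perm : forall M N, Permutation M N -> meq M N.
Proof. intros M N H. exists M. split; auto using Forall2_tyeq_refl. Qed.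

Lemma meq_F2 : forall M N, Forall2 tyeq M N -> meq M N.
Proof. intros M N H. exists N. split; auto. Qed.

Lemma meq_app : forall A B C D, meq A B -> meq C D -> meq (A ++ C) (B ++ D).
Proof.
  intros A B C D [B1 [H1 H2]] [D1 [H3 H4]]. exists (B1 ++ D1). split.
  - apply Permutation_app; auto.
  - apply Forall2_app; auto.
Qed.

Lemma meq_length : forall M N, meq M N -> length M = length N.
Proof.
  intros M N [N' [H1 H2]]. rewrite (Forall2_length H2). apply Permutation_length; auto.
Qed.

Lemma meq_nil_l : forall M, meq [] M -> M = [].
Proof. intros M H. apply meq_length in H. destruct M; simpl in *; congruence. Qed.

Lemma meq_ch : forall t A B, meq A B -> meq (ch t A) (ch t B).
Proof.
  intros t A B H. destruct A as [|a A].
  - apply meq_nil_l in H. subst. apply meq_refl.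
  - destruct B as [|b B].
    + apply meq_sym, meq_nil_l in H. discriminate.
    + exact H.
Qed.

Definition msub (A B : list ty) := exists R, meq (A ++ R) B.

Lemma msub_meq : forall A B, meq A B -> msub A B.
Proof. intros A B H. exists []. rewrite app_nil_r. auto. Qed.

Lemma msub_refl : forall A, msub A A.
Proof. intros. apply msub_meq, meq_refl. Qed.

Lemma msub_trans : forall A B C, msub A B -> msub B C -> msub A C.
Proof.
  intros A B C [R1 H1] [R2 H2]. exists (R1 ++ R2).
  rewrite app_assoc. eapply meq_trans; [|apply H2]. apply meq_app; auto. apply meq_refl.
Qed.

Lemma msub_app : forall A B C D, msub A B -> msub C D -> msub (A ++ C) (B ++ D).
Proof.
  intros A B C D [R1 H1] [R2 H2]. exists (R1 ++ R2).
  eapply meq_trans; [|apply meq_app; [apply H1|apply H2]].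
  apply meq_perm.
  rewrite <- !app_assoc. apply Permutation_app_head.
  rewrite !app_assoc. apply Permutation_app_tail. apply Permutation_app_comm.
Qed.

Lemma msub_nil : forall A, msub [] A.
Proof. intros A. exists A. apply meq_refl. Qed.

Lemma msub_app_r : forall A B, msub A (A ++ B).
Proof. intros. exists B. apply meq_refl. Qed.

Lemma msub_app_l : forall A B, msub A (B ++ A).
Proof. intros. exists B. apply meq_perm, Permutation_app_comm. Qed.

Lemma msub_nil_r : forall A, msub A [] -> A = [].
Proof.
  intros A [R H]. apply meq_length in H. destruct A; simpl in *; auto; discriminate.
Qed.

Lemma msub_perm : forall A B, Permutation A B -> msub A B.
Proof. intros. apply msub_meq, meq_perm; auto. Qed.

Definition envEq (G G' : env) := forall n, meq (G n) (G' n).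
Definition envSub (G G' : env) := forall n, msub (G n) (G' n).
Definition emp : env := fun _ => [].

Lemma envSub_trans : forall G1 G2 G3, envSub G1 G2 -> envSub G2 G3 -> envSub G1 G3.
Proof. intros G1 G2 G3 H1 H2 n. eapply msub_trans; eauto. Qed.
Lemma envEq_Sub : forall G G', envEq G G' -> envSub G G'.
Proof. intros G G' H n. apply msub_meq; auto. Qed.
Lemma envSub_refl : forall G, envSub G G.
Proof. intros G n. apply msub_refl. Qed.

Definition arrp (p : list ty * ty) : ty := Arr (fst p) (snd p).

Inductive typ2 : env -> term -> ty -> nat -> Prop :=
| T2_var : forall x s, typ2 (env_single x s) (Var x) s 1
| T2_abs : forall G M M' t s k,
    typ2 (scons M' G) t s k -> msub M' M -> typ2 G (Lam t) (Arr M s) (S k)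
| T2_app : forall (L : list (list ty * ty)) tau0 tau1 G D Lr N t u r s kt ku kr,
    mtyp2 G t (ch tau0 (map arrp L)) kt ->
    mtyp2 D u N ku ->
    meq N (ch tau1 (concat (map fst L))) ->
    msub (Lr 0) (map snd L) ->
    typ2 Lr r s kr ->
    typ2 (env_union G (env_union D (fun n => Lr (S n)))) (App t u r) s (S (kt + ku + kr))
with mtyp2 : env -> term -> list ty -> nat -> Prop :=
| M2_nil : forall t, mtyp2 emp t [] 0
| M2_cons : forall G G' t s M k k',
    typ2 G t s k -> mtyp2 G' t M k' -> mtyp2 (env_union G G') t (s :: M) (k + k').

Scheme typ2_ind2 := Induction for typ2 Sort Prop
with mtyp2_ind2 := Induction for mtyp2 Sort Prop.
Combined Scheme typ2_mut from typ2_ind2, mtyp2_ind2.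

Scheme typ_ind2 := Induction for typ Sort Prop
with mtyp_ind2 := Induction for mtyp Sort Prop.
Combined Scheme typ_mut from typ_ind2, mtyp_ind2.

Lemma embed : (forall G t s k, typ G t s k -> typ2 G t s k) /\
              (forall G t M k, mtyp G t M k -> mtyp2 G t M k).
Proof.
  apply typ_mut; intros.
  - constructor.
  - econstructor; eauto. apply msub_refl.
  - econstructor; eauto. apply msub_meq; auto.
  - replace G with (env_union G emp).
    + replace k with (k + 0) by lia. constructor; auto. constructor.
    + apply functional_extensionality; intro n. unfold env_union, emp. apply app_nil_r.
  - constructor; auto.
Qed.

Lemma typ2_env : forall G G' t s k, typ2 G t s k -> G = G' -> typ2 G' t s k.
Proof. intros; subst; auto. Qed.
Lemma mtyp2_env : forall G G' t s k, mtyp2 G t s k -> G = G' -> mtyp2 G' t s k.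
Proof. intros; subst; auto. Qed.

Definition liftenv (n c : nat) (G : env) : env :=
  fun m => if m <? c then G m else if m <? c + n then [] else G (m - n).

Ltac cases := repeat (match goal with
  | |- context [?a <? ?b] => destruct (Nat.ltb_spec a b)
  | |- context [?a =? ?b] => destruct (Nat.eqb_spec a b)
  end); try lia.

Lemma lift_typ : (forall G t s k, typ2 G t s k -> forall n c, typ2 (liftenv n c G) (lift n c t) s k) /\
                 (forall G t M k, mtyp2 G t M k -> forall n c, mtyp2 (liftenv n c G) (lift n c t) M k).
Proof.
  apply typ2_mut; intros; simpl.
  - eapply typ2_env; [constructor|]. apply functional_extensionality; intro i.
    unfold liftenv, env_single. cases; auto; f_equal; lia.
  - econstructor; [|eauto]. eapply typ2_env; [apply (H n (S c))|].
    apply functional_extensionality; intros [|i]; unfold liftenv, scons; cases; auto;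
    replace (S i - n) with (S (i - n)) by lia; auto.
  - eapply typ2_env.
    + econstructor; [apply H | apply H0 | eauto | | apply (H1 n (S c))].
      unfold liftenv; simpl. auto.
    + apply functional_extensionality; intros i; unfold liftenv, env_union; simpl; cases; auto.
      destruct n; simpl; rewrite ?Nat.sub_0_r; auto; repeat f_equal; lia.
  - eapply mtyp2_env; [constructor|]. apply functional_extensionality; intros i; unfold liftenv, emp; cases; auto.
  - eapply mtyp2_env; [constructor; eauto|]. apply functional_extensionality; intros i; unfold liftenv, env_union; cases; auto.
Qed.

Definition deriv := (env * ty * nat)%type.
Definition dG (d : deriv) := fst (fst d).
Definition dT (d : deriv) := snd (fst d).
Definition dK (d : deriv) := snd d.
Definition valid (t : term) (d : deriv) := typ2 (dG d) t (dT d) (dK d).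
Fixpoint sumenv (ds : list deriv) : env :=
  match ds with [] => emp | d :: ds' => env_union (dG d) (sumenv ds') end.
Definition types (ds : list deriv) := map dT ds.
Fixpoint sumsize (ds : list deriv) : nat :=
  match ds with [] => 0 | d :: ds' => dK d + sumsize ds' end.

Lemma sumenv_app : forall ds1 ds2 n, sumenv (ds1 ++ ds2) n = sumenv ds1 n ++ sumenv ds2 n.
Proof. induction ds1; intros; simpl; auto. unfold env_union. rewrite IHds1, app_assoc. auto. Qed.
Lemma sumsize_app : forall ds1 ds2, sumsize (ds1 ++ ds2) = sumsize ds1 + sumsize ds2.
Proof. induction ds1; intros; simpl; auto. rewrite IHds1. lia. Qed.
Lemma sumenv_perm : forall ds1 ds2, Permutation ds1 ds2 -> forall n, Permutation (sumenv ds1 n) (sumenv ds2 n).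
Proof.
  induction 1; intros; simpl; unfold env_union; auto.
  - apply Permutation_app_head; auto.
  - rewrite !app_assoc. apply Permutation_app_tail, Permutation_app_comm.
  - eapply Permutation_trans; eauto.
Qed.
Lemma sumsize_perm : forall ds1 ds2, Permutation ds1 ds2 -> sumsize ds1 = sumsize ds2.
Proof. induction 1; simpl; lia. Qed.

Lemma mtyp2_list : forall G t M k, mtyp2 G t M k ->
  exists ds, Forall (valid t) ds /\ types ds = M /\ G = sumenv ds /\ k = sumsize ds.
Proof.
  induction 1.
  - exists []. simpl. auto.
  - destruct IHmtyp2 as [ds [H1 [H2 [H3 H4]]]]. exists ((G, s, k) :: ds).
    simpl. unfold types in *. simpl. subst. split; auto; constructor; auto.
Qed.

Lemma list_mtyp2 : forall t ds, Forall (valid t) ds -> mtyp2 (sumenv ds) t (types ds) (sumsize ds).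
Proof. induction 1; simpl; constructor; auto. Qed.

Lemma select_meq : forall A ds, meq A (types ds) ->
  exists ds', Permutation ds ds' /\ Forall2 tyeq A (types ds').
Proof.
  intros A ds [B [HP HF]]. destruct (Permutation_map_inv _ _ HP) as [ds' [E P]].
  exists ds'. split; auto. unfold types. rewrite <- E. auto.
Qed.

Lemma select_msub : forall A ds, msub A (types ds) ->
  exists ds1 ds2, Permutation ds (ds1 ++ ds2) /\ Forall2 tyeq A (types ds1).
Proof.
  intros A ds [R H]. destruct (select_meq _ _ H) as [ds' [HP HF]].
  destruct (Forall2_app_inv_l _ _ HF) as [B1 [B2 [H1 [H2 E]]]].
  unfold types in E. destruct (map_eq_app _ _ _ _ E) as [ds1 [ds2 [E1 [E2 E3]]]].
  subst. exists ds1, ds2. split; auto.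
Qed.

Lemma split_F2 : forall A1 A2 ds, Forall2 tyeq (A1 ++ A2) (types ds) ->
  exists ds1 ds2, ds = ds1 ++ ds2 /\ Forall2 tyeq A1 (types ds1) /\ Forall2 tyeq A2 (types ds2).
Proof.
  intros A1 A2 ds HF.
  destruct (Forall2_app_inv_l _ _ HF) as [B1 [B2 [H1 [H2 E]]]].
  unfold types in E. destruct (map_eq_app _ _ _ _ E) as [ds1 [ds2 [E1 [E2 E3]]]].
  subst. exists ds1, ds2. auto.
Qed.

Definition substenv (j : nat) (G E : env) : env :=
  fun n => (if n <? j then G n else G (S n)) ++ (if n <? j then [] else E (n - j)).

Lemma substenv_S : forall j G E n, substenv (S j) G E (S n) = substenv j (fun m => G (S m)) E n.
Proof. reflexivity. Qed.

Lemma meq_eq : forall A B, A = B -> meq A B.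
Proof. intros; subst; apply meq_refl. Qed.

Lemma perm2 : forall {A} (a e1 b e2 : list A), Permutation ((a++e1)++(b++e2)) ((a++b)++(e1++e2)).
Proof. intros. rewrite <- !app_assoc. apply Permutation_app_head. apply Permutation_app_swap_app. Qed.

Lemma perm3 : forall {A} (a e1 b e2 c e3 : list A),
  Permutation ((a++e1)++(b++e2)++(c++e3)) ((a++b++c)++(e1++e2++e3)).
Proof.
  intros. eapply Permutation_trans.
  - apply Permutation_app_head. apply perm2.
  - apply perm2.
Qed.

Lemma types_nil : forall ds, Forall2 tyeq [] (types ds) -> ds = [].
Proof. intros ds H. inversion H. destruct ds; simpl in *; congruence. Qed.

Lemma types_one : forall s ds, Forall2 tyeq [s] (types ds) -> exists d, ds = [d] /\ tyeq s (dT d).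
Proof.
  intros s ds H. destruct ds as [|d [|d' ds]]; inversion H; subst.
  - exists d. auto.
  - inversion H5.
Qed.

Lemma rebuild_map : forall L M1, Forall2 tyeq (map arrp L) M1 ->
  exists L', M1 = map arrp L' /\ Forall2 (fun p q => meq (fst p) (fst q) /\ tyeq (snd p) (snd q)) L L'.
Proof.
  induction L as [|p L IH]; intros M1 H; inversion H; subst.
  - exists []. auto.
  - destruct (IH _ H4) as [L' [E F]]. subst.
    inversion H2 as [|M0 N N' s0 s' HP HF Hs]; subst.
    exists ((N, s') :: L'). split; auto. constructor; auto. split; auto.
    exists N'. auto.
Qed.

Lemma rebuild : forall tau0 L M1, Forall2 tyeq (ch tau0 (map arrp L)) M1 ->
  exists tau0' L', M1 = ch tau0' (map arrp L') /\ meq (concat (map fst L)) (concat (map fst L'))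
    /\ Forall2 tyeq (map snd L) (map snd L').
Proof.
  intros tau0 [|p L] M1 H.
  - simpl in H. inversion H; subst. inversion H4; subst. exists y, []. simpl. split; auto. split; auto. apply meq_refl.
  - assert (H' : Forall2 tyeq (map arrp (p :: L)) M1) by exact H.
    destruct (rebuild_map _ _ H') as [L' [E F]]. subst.
    exists tau0, L'. split.
    + inversion F; subst. reflexivity.
    + clear H H'. induction F; simpl.
      * split; [apply meq_refl|constructor].
      * destruct H as [H1 H2]. destruct IHF as [IH1 IH2]. split.
        -- apply meq_app; auto.
        -- constructor; auto.
Qed.

Ltac envpt := intro; apply meq_eq;
  unfold substenv, env_single, env_union, emp, liftenv, scons; cases; simpl; unfold env_union, emp; rewrite ?app_nil_r; auto.

Lemma subst_typ :
 (forall G t a k, typ2 G t a k -> forall j u ds, Forall (valid u) ds -> Forall2 tyeq (G j) (types ds) ->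
   exists G' a' k', typ2 G' (subst u j t) a' k' /\ tyeq a a' /\ envEq G' (substenv j G (sumenv ds))
     /\ k' + length (G j) = k + sumsize ds) /\
 (forall G t M k, mtyp2 G t M k -> forall j u ds, Forall (valid u) ds -> Forall2 tyeq (G j) (types ds) ->
   exists G' M' k', mtyp2 G' (subst u j t) M' k' /\ Forall2 tyeq M M' /\ envEq G' (substenv j G (sumenv ds))
     /\ k' + length (G j) = k + sumsize ds).
Proof.
  apply typ2_mut.
  -
    intros x s j u ds Hv HF. simpl.
    destruct (Nat.ltb_spec x j).
    + assert (E : env_single x s j = []) by (unfold env_single; cases; auto).
      rewrite E in HF |- *. apply types_nil in HF. subst.
      exists (env_single x s), s, 1. split; [|split; [|split]].
      * constructor.
      * apply tyeq_refl.
      * envpt.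
      * simpl. lia.
    + destruct (Nat.eqb_spec x j).
      * subst. assert (E : env_single j s j = [s]) by (unfold env_single; cases; auto).
        rewrite E in HF |- *. destruct (types_one _ _ HF) as [d [E1 E2]]. subst.
        inversion Hv; subst.
        exists (liftenv j 0 (dG d)), (dT d), (dK d). split; [|split; [|split]].
        -- apply (proj1 lift_typ). auto.
        -- auto.
        -- envpt.
        -- simpl. lia.
      * assert (E : env_single x s j = []) by (unfold env_single; cases; auto).
        rewrite E in HF |- *. apply types_nil in HF. subst.
        exists (env_single (x - 1) s), s, 1. split; [|split; [|split]].
        -- constructor.
        -- apply tyeq_refl.
        -- envpt.
        -- simpl. lia.
  -
    intros G M M' t s k Ht IH Hsub j u ds Hv HF. simpl.
    destruct (IH (S j) u ds Hv HF) as [G1 [s1 [k1 [H1 [H2 [H3 H4]]]]]].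
    exists (fun n => G1 (S n)), (Arr M s1), (S k1). repeat split.
    + apply T2_abs with (M' := G1 0).
      * eapply typ2_env; [apply H1|]. apply functional_extensionality; intros [|n]; auto.
      * eapply msub_trans; [|apply Hsub]. apply msub_meq.
        assert (H0 := H3 0). unfold substenv in H0; simpl in H0. rewrite app_nil_r in H0. auto.
    + apply tyeq_arr with (N' := M); auto using Forall2_tyeq_refl.
    + intro n. exact (H3 (S n)).
    + simpl in H4 |- *. lia.
  -
    intros L tau0 tau1 G D Lr N t u r s kt ku kr Ht IHt Hu IHu HN HLr Hr IHr j u' ds Hv HF.
    simpl. change (env_union G (env_union D (fun n => Lr (S n))) j) with (G j ++ (D j ++ Lr (S j))) in HF |- *.
    destruct (split_F2 _ _ _ HF) as [ds1 [ds23 [E1 [F1 F23]]]].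
    destruct (split_F2 _ _ _ F23) as [ds2 [ds3 [E2 [F2 F3]]]]. subst.
    apply Forall_app in Hv as [Hv1 Hv23]. apply Forall_app in Hv23 as [Hv2 Hv3].
    destruct (IHt j u' ds1 Hv1 F1) as [G1 [M1 [kt1 [Ht1 [Ht2 [Ht3 Ht4]]]]]].
    destruct (IHu j u' ds2 Hv2 F2) as [D1 [N1 [ku1 [Hu1 [Hu2 [Hu3 Hu4]]]]]].
    destruct (IHr (S j) u' ds3 Hv3 F3) as [Lr1 [s1 [kr1 [Hr1 [Hr2 [Hr3 Hr4]]]]]].
    destruct (rebuild _ _ _ Ht2) as [tau0' [L' [EM [HC HS]]]]. subst M1.
    exists (env_union G1 (env_union D1 (fun n => Lr1 (S n)))), s1, (S (kt1 + ku1 + kr1)).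
    repeat split; auto.
    + eapply T2_app; eauto.
      * eapply meq_trans; [apply meq_sym, meq_F2; eauto|]. eapply meq_trans; [apply HN|]. apply meq_ch; auto.
      * eapply msub_trans.
        -- apply msub_meq. eapply meq_trans; [apply (Hr3 0)|]. unfold substenv; simpl. rewrite app_nil_r. apply meq_refl.
        -- eapply msub_trans; [apply HLr|]. apply msub_meq, meq_F2; auto.
    + intro n. unfold env_union.
      eapply meq_trans; [apply meq_app; [apply Ht3|apply meq_app; [apply Hu3|apply (Hr3 (S n))]]|].
      rewrite substenv_S. unfold substenv. destruct (n <? j).
      * rewrite !app_nil_r. apply meq_refl.
      * rewrite !sumenv_app. apply meq_perm, perm3.
    + rewrite !sumsize_app, !length_app. simpl. lia.
  -
    intros t j u ds Hv HF. unfold emp in HF. apply types_nil in HF. subst.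
    exists emp, [], 0. repeat split; auto. constructor. envpt.
  -
    intros G G' t s M k k' Ht IHt Hm IHm j u ds Hv HF.
    change (env_union G G' j) with (G j ++ G' j) in HF |- *.
    destruct (split_F2 _ _ _ HF) as [ds1 [ds2 [E1 [F1 F2]]]]. subst.
    apply Forall_app in Hv as [Hv1 Hv2].
    destruct (IHt j u ds1 Hv1 F1) as [G1 [s1 [k1 [H1 [H2 [H3 H4]]]]]].
    destruct (IHm j u ds2 Hv2 F2) as [G2 [M2 [k2 [H5 [H6 [H7 H8]]]]]].
    exists (env_union G1 G2), (s1 :: M2), (k1 + k2). repeat split.
    + constructor; auto.
    + constructor; auto.
    + intro n. unfold env_union. eapply meq_trans; [apply meq_app; [apply H3|apply H7]|].
      unfold substenv. destruct (n <? j).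
      * rewrite !app_nil_r. apply meq_refl.
      * rewrite !sumenv_app. apply meq_perm, perm2.
    + rewrite !sumsize_app, !length_app. lia.
Qed.

Lemma Forall_perm : forall {A} (P : A -> Prop) l l', Permutation l l' -> Forall P l -> Forall P l'.
Proof.
  intros A P l l' HP H. rewrite Forall_forall in *. intros x Hx. apply H.
  eapply Permutation_in; [apply Permutation_sym; eauto|auto].
Qed.

Lemma lift0 : forall t c, lift 0 c t = t.
Proof.
  induction t; intros c; simpl.
  - destruct (n <? c); f_equal; lia.
  - rewrite IHt; auto.
  - rewrite IHt1, IHt2, IHt3; auto.
Qed.

Lemma lift_lift : forall t a b c, lift a c (lift b c t) = lift (a + b) c t.
Proof.
  induction t; intros a b c; simpl.
  - destruct (Nat.ltb_spec n c); simpl.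
    + destruct (Nat.ltb_spec n c); try lia. auto.
    + destruct (Nat.ltb_spec (n + b) c); try lia. f_equal; lia.
  - rewrite IHt; auto.
  - rewrite IHt1, IHt2, IHt3; auto.
Qed.

Definition liftd (d : deriv) : deriv := (liftenv 1 0 (dG d), dT d, dK d).

Lemma sumenv_liftd0 : forall ds, sumenv (map liftd ds) 0 = [].
Proof. induction ds; simpl; auto; unfold env_union; rewrite IHds; auto. Qed.
Lemma sumenv_liftdS : forall ds n, sumenv (map liftd ds) (S n) = sumenv ds n.
Proof.
  induction ds; intros; simpl; auto. unfold env_union. rewrite IHds. unfold liftd, dG at 1, liftenv. simpl.
  rewrite Nat.sub_0_r. reflexivity.
Qed.
Lemma sumsize_liftd : forall ds, sumsize (map liftd ds) = sumsize ds.
Proof. induction ds; simpl; auto. Qed.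

Lemma redex_plug : forall D t0 G a k, typ2 G (plug D (Lam t0)) a k ->
  forall M tau u ds, a = Arr M tau -> Forall (valid u) ds -> Forall2 tyeq M (types ds) ->
  exists G' tau' k', typ2 G' (plug D (subst (lift (depth D) 0 u) 0 t0)) tau' k' /\ tyeq tau tau'
    /\ envSub G' (env_union G (sumenv ds)) /\ k' < k + sumsize ds.
Proof.
  induction D as [|a0 b0 D IH]; intros t0 G a k H M tau u ds Ea Hv HF; simpl in *.
  - subst. inversion H as [|G0 M0 M' t s k0 Hb Hsub| ]; subst.
    assert (Hs : msub M' (types ds)) by (eapply msub_trans; [apply Hsub|apply msub_meq, meq_F2; auto]).
    destruct (select_msub _ _ Hs) as [ds1 [ds2 [HP HF1]]].
    assert (Hv1 : Forall (valid u) ds1).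
    { apply Forall_perm with (P := valid u) in HP; auto. apply Forall_app in HP. tauto. }
    destruct ((proj1 subst_typ) _ _ _ _ Hb 0 u ds1 Hv1 HF1) as [G1 [s1 [k1 [H1 [H2 [H3 H4]]]]]].
    exists G1, s1, k1. rewrite lift0. split; [auto|split; [auto|split]].
    + intro n. eapply msub_trans; [apply msub_meq, H3|].
      unfold substenv, env_union; simpl. rewrite Nat.sub_0_r.
      apply msub_app; [apply msub_refl|].
      eapply msub_trans; [apply msub_app_r with (B := sumenv ds2 n)|].
      rewrite <- sumenv_app. apply msub_perm, Permutation_sym, sumenv_perm; auto.
    + apply sumsize_perm in HP. rewrite sumsize_app in HP. simpl in H4. lia.
  - subst. inversion H as [| |L tau0 tau1 G0 Dn Lr N t u1 r s kt ku kr Ht Hu HN HLr Hr]; subst.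
    assert (Hv' : Forall (valid (lift 1 0 u)) (map liftd ds)).
    { apply Forall_map. eapply Forall_impl; [|apply Hv]. intros d Hd. unfold valid in *.
      apply (proj1 lift_typ). auto. }
    assert (HF' : Forall2 tyeq M (types (map liftd ds))).
    { unfold types. rewrite map_map. exact HF. }
    destruct (IH t0 Lr _ kr Hr M tau _ _ eq_refl Hv' HF') as [Lr1 [s1 [k1 [H1 [H2 [H3 H4]]]]]].
    rewrite lift_lift, Nat.add_1_r in H1.
    exists (env_union G0 (env_union Dn (fun n => Lr1 (S n)))), s1, (S (kt + ku + k1)).
    split; [|split; [auto|split]].
    + eapply T2_app; eauto.
      eapply msub_trans; [apply H3|]. unfold env_union. rewrite sumenv_liftd0, app_nil_r. auto.
    + intro n. unfold env_union. rewrite <- !app_assoc.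
      apply msub_app; [apply msub_refl|]. apply msub_app; [apply msub_refl|].
      eapply msub_trans; [apply H3|]. unfold env_union. rewrite sumenv_liftdS. apply msub_refl.
    + rewrite sumsize_liftd in H4. lia.
Qed.

Definition SRprop (t t' : term) := forall G a k, typ2 G t a k ->
  exists G' a' k', typ2 G' t' a' k' /\ k' < k /\ envSub G' G /\ tyeq a a'.

Lemma mtyp_SR : forall t t', SRprop t t' -> forall G M k, mtyp2 G t M k ->
  exists G' M' k', mtyp2 G' t' M' k' /\ k' + length M <= k /\ envSub G' G /\ Forall2 tyeq M M'.
Proof.
  intros t t' HS G M k H. induction H.
  - exists emp, [], 0. split; [constructor|]. simpl. split; auto. split; [|constructor].
    intro n. apply msub_refl.
  - destruct (HS _ _ _ H) as [G1 [s1 [k1 [H1 [H2 [H3 H4]]]]]].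
    destruct (IHmtyp2 HS) as [G2 [M2 [k2 [H5 [H6 [H7 H8]]]]]].
    exists (env_union G1 G2), (s1 :: M2), (k1 + k2). split; [constructor; auto|].
    simpl. split; [lia|]. split; [|constructor; auto].
    intro n. unfold env_union. apply msub_app; auto.
Qed.

Lemma concat_nil_fst : forall (L : list (list ty * ty)), concat (map fst L) = [] ->
  Forall2 (fun p ds => Forall2 tyeq (fst p) (types ds)) L (map (fun _ => []) L).
Proof.
  induction L as [|p L IH]; simpl; intros H; constructor.
  - apply app_eq_nil in H. destruct H as [H _]. rewrite H. constructor.
  - apply IH. apply app_eq_nil in H. tauto.
Qed.

Lemma concat_map_nil : forall {A B} (L : list A), concat (map (fun _ => @nil B) L) = [].
Proof. induction L; simpl; auto. Qed.

Lemma split_concat : forall (L : list (list ty * ty)) ds, Forall2 tyeq (concat (map fst L)) (types ds) ->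
  exists dss, concat dss = ds /\ Forall2 (fun p ds => Forall2 tyeq (fst p) (types ds)) L dss.
Proof.
  induction L as [|p L IH]; simpl; intros ds H.
  - inversion H. destruct ds; simpl in *; try discriminate. exists []. auto.
  - destruct (split_F2 _ _ _ H) as [ds1 [ds2 [E [F1 F2]]]].
    destruct (IH _ F2) as [dss [E2 F]]. exists (ds1 :: dss). simpl. subst. auto.
Qed.

Lemma split_u : forall Dn u N ku tau1 (L : list (list ty * ty)), mtyp2 Dn u N ku ->
  meq N (ch tau1 (concat (map fst L))) ->
  exists dss, Forall2 (fun p ds => Forall2 tyeq (fst p) (types ds)) L dss /\ Forall (valid u) (concat dss)
    /\ envSub (sumenv (concat dss)) Dn /\ sumsize (concat dss) <= ku.
Proof.
  intros Dn u N ku tau1 L Hu HN.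
  destruct (mtyp2_list _ _ _ _ Hu) as [dus [Hv [E1 [E2 E3]]]]. subst.
  destruct (concat (map fst L)) as [|c C] eqn:EC.
  - exists (map (fun _ => []) L). rewrite concat_map_nil. split; [apply concat_nil_fst; auto|].
    simpl. split; [constructor|]. split; [|lia]. intro n. apply msub_nil.
  - simpl in HN. apply meq_sym in HN. destruct (select_meq _ _ HN) as [dus' [HP HF]].
    rewrite <- EC in HF. destruct (split_concat _ _ HF) as [dss [E F]].
    exists dss. rewrite E. split; auto. split; [eapply Forall_perm; eauto|]. split.
    + intro n. apply msub_perm, Permutation_sym, sumenv_perm; auto.
    + rewrite (sumsize_perm _ _ HP). auto.
Qed.

Lemma gather : forall D t0 u (L : list (list ty * ty)) dts dss,
  Forall (valid (plug D (Lam t0))) dts -> types dts = map arrp L ->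
  Forall2 (fun p ds => Forall2 tyeq (fst p) (types ds)) L dss -> Forall (valid u) (concat dss) ->
  exists dws, Forall (valid (plug D (subst (lift (depth D) 0 u) 0 t0))) dws
    /\ Forall2 tyeq (map snd L) (types dws)
    /\ envSub (sumenv dws) (env_union (sumenv dts) (sumenv (concat dss)))
    /\ sumsize dws + length L <= sumsize dts + sumsize (concat dss).
Proof.
  intros D t0 u. induction L as [|p L IH]; intros dts dss Hv Ht HF Hu.
  - destruct dts; try discriminate. inversion HF; subst. exists []. simpl.
    split; [constructor|]. split; [constructor|]. split; [|lia]. intro n. apply msub_nil.
  - destruct dts as [|d dts]; try discriminate. inversion HF as [|p' ds L' dss' Hp Hr]; subst.
    inversion Hv as [|? ? Hv1 Hv2]; subst. simpl in Hu. apply Forall_app in Hu as [Hu1 Hu2].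
    injection Ht as Hd Ht.
    destruct (IH _ _ Hv2 Ht Hr Hu2) as [dws [W1 [W2 [W3 W4]]]].
    destruct (redex_plug D t0 _ _ _ Hv1 (fst p) (snd p) u ds Hd Hu1 Hp) as [G1 [s1 [k1 [R1 [R2 [R3 R4]]]]]].
    exists ((G1, s1, k1) :: dws). split; [constructor; auto|]. split; [constructor; auto|]. split.
    + intro n. simpl. unfold env_union. unfold dG at 1; simpl.
      eapply msub_trans; [apply msub_app; [apply R3|apply W3]|].
      unfold env_union. rewrite sumenv_app. apply msub_perm, perm2.
    + simpl. rewrite sumsize_app. unfold dK in *; simpl in *. lia.
Qed.

Lemma SR : forall t t', dbeta t t' -> SRprop t t'.
Proof.
  induction 1; intros G a k H0.
  -
    destruct H as [D t0 u r].
    inversion H0 as [| |L tau0 tau1 G0 Dn Lr N t1 u1 r1 s kt ku kr Ht Hu HN HLr Hr]; subst.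
    set (w := plug D (subst (lift (depth D) 0 u) 0 t0)).
    destruct L as [|p L'].
    + simpl in HLr. apply msub_nil_r in HLr.
      assert (HF : Forall2 tyeq (Lr 0) (types [])) by (rewrite HLr; constructor).
      destruct ((proj1 subst_typ) _ _ _ _ Hr 0 w [] (Forall_nil _) HF) as [G1 [s1 [k1 [H1 [H2 [H3 H4]]]]]].
      exists G1, s1, k1. split; auto. split; [simpl in H4; lia|]. split; auto.
      intro n. eapply msub_trans; [apply msub_meq, H3|]. unfold substenv, env_union, emp; simpl.
      rewrite app_nil_r, app_assoc. apply msub_app_l.
    + assert (Ht' : mtyp2 G0 (plug D (Lam t0)) (map arrp (p :: L')) kt) by exact Ht.
      destruct (mtyp2_list _ _ _ _ Ht') as [dts [Hvt [Et1 [Et2 Et3]]]]. subst G0 kt.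
      destruct (split_u _ _ _ _ _ _ Hu HN) as [dss [S1 [S2 [S3 S4]]]].
      destruct (gather D t0 u _ _ _ Hvt Et1 S1 S2) as [dws [W1 [W2 [W3 W4]]]].
      assert (Hs : msub (Lr 0) (types dws)) by (eapply msub_trans; [apply HLr|apply msub_meq, meq_F2; auto]).
      destruct (select_msub _ _ Hs) as [dw1 [dw2 [HP HF1]]].
      assert (Hv1 : Forall (valid w) dw1).
      { apply Forall_perm with (P := valid w) in HP; auto. apply Forall_app in HP. tauto. }
      destruct ((proj1 subst_typ) _ _ _ _ Hr 0 w dw1 Hv1 HF1) as [G1 [s1 [k1 [H1 [H2 [H3 H4]]]]]].
      exists G1, s1, k1. split; auto. split.
      * apply sumsize_perm in HP. rewrite sumsize_app in HP. lia.
      * split; auto. intro n. eapply msub_trans; [apply msub_meq, H3|].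
        unfold substenv, env_union; simpl. rewrite Nat.sub_0_r.
        eapply msub_trans; [|apply msub_perm; rewrite app_assoc; apply Permutation_app_comm].
        apply msub_app; [apply msub_refl|].
        eapply msub_trans; [apply msub_app_r with (B := sumenv dw2 n)|].
        rewrite <- sumenv_app. eapply msub_trans; [apply msub_perm, Permutation_sym, sumenv_perm, HP|].
        eapply msub_trans; [apply W3|]. unfold env_union. apply msub_app; [apply msub_refl|apply S3].
  -
    inversion H0 as [|G0 M M' t0 s k0 Hb Hsub|]; subst.
    destruct (IHdbeta _ _ _ Hb) as [G1 [s1 [k1 [H1 [H2 [H3 H4]]]]]].
    exists (fun n => G1 (S n)), (Arr M s1), (S k1). split; [|split; [lia|split]].
    + apply T2_abs with (M' := G1 0); [|eapply msub_trans; [apply (H3 0)|auto]].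
      eapply typ2_env; [apply H1|]. apply functional_extensionality; intros [|n]; auto.
    + intro n. apply (H3 (S n)).
    + apply tyeq_arr with (N' := M); auto using Forall2_tyeq_refl.
  -
    inversion H0 as [| |L tau0 tau1 G0 Dn Lr N t1 u1 r1 s kt ku kr Ht Hu HN HLr Hr]; subst.
    destruct (mtyp_SR _ _ IHdbeta _ _ _ Ht) as [G1 [M1 [k1 [H1 [H2 [H3 H4]]]]]].
    destruct (rebuild _ _ _ H4) as [tau0' [L' [EM [HC HS]]]]. subst M1.
    exists (env_union G1 (env_union Dn (fun n => Lr (S n)))), a, (S (k1 + ku + kr)).
    split; [|split; [|split]].
    + eapply T2_app; eauto.
      * eapply meq_trans; [apply HN|]. apply meq_ch; auto.
      * eapply msub_trans; [apply HLr|]. apply msub_meq, meq_F2; auto.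
    + assert (length (ch tau0 (map arrp L)) >= 1) by (destruct L; simpl; lia). lia.
    + intro n. unfold env_union. apply msub_app; auto. apply msub_refl.
    + apply tyeq_refl.
  -
    inversion H0 as [| |L tau0 tau1 G0 Dn Lr N t1 u1 r1 s kt ku kr Ht Hu HN HLr Hr]; subst.
    destruct (mtyp_SR _ _ IHdbeta _ _ _ Hu) as [D1 [N1 [k1 [H1 [H2 [H3 H4]]]]]].
    exists (env_union G0 (env_union D1 (fun n => Lr (S n)))), a, (S (kt + k1 + kr)).
    split; [|split; [|split]].
    + eapply T2_app; eauto. eapply meq_trans; [apply meq_sym, meq_F2; eauto| exact HN].
    + apply meq_length in HN.
      assert (length (ch tau1 (concat (map fst L))) >= 1) by (destruct (concat (map fst L)); simpl; lia). lia.
    + intro n. unfold env_union. apply msub_app; [apply msub_refl|]. apply msub_app; auto. apply msub_refl.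
    + apply tyeq_refl.
  -
    inversion H0 as [| |L tau0 tau1 G0 Dn Lr N t1 u1 r1 s kt ku kr Ht Hu HN HLr Hr]; subst.
    destruct (IHdbeta _ _ _ Hr) as [Lr1 [s1 [k1 [H1 [H2 [H3 H4]]]]]].
    exists (env_union G0 (env_union Dn (fun n => Lr1 (S n)))), s1, (S (kt + ku + k1)).
    split; [|split; [lia|split; auto]].
    + eapply T2_app; eauto. eapply msub_trans; [apply (H3 0)|auto].
    + intro n. unfold env_union. apply msub_app; [apply msub_refl|]. apply msub_app; [apply msub_refl|]. apply H3.
Qed.

Lemma final : forall k G t s, typ2 G t s k -> SN t /\ maxred_le t k.
Proof.
  induction k as [k IHk] using (well_founded_induction lt_wf).
  intros G t s H. split.
  - constructor. intros t' Hs. destruct (SR _ _ Hs _ _ _ H) as [G' [a' [k' [H1 [H2 _]]]]].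
    exact (proj1 (IHk k' H2 _ _ _ H1)).
  - intros n t' Hn. destruct Hn as [|n t1 t1' t'' Hs Hn].
    + lia.
    + destruct (SR _ _ Hs _ _ _ H) as [G' [a' [k' [H1 [H2 _]]]]].
      assert (n <= k') by (exact (proj2 (IHk k' H2 _ _ _ H1) n t'' Hn)). lia.
Qed.

Theorem mainTheorem9 (G : env) (t : term) (s : ty) (k : nat) :
  typ G t s k -> SN t /\ maxred_le t k.
Proof. intros H. eapply final. apply (proj1 embed). exact H. Qed.
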